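(* Let $L/K$ be a vast extension of fields of characteristic $0$, and let $K'/K$ be a finite extension which is disjoint from $L/K$. Then the extension $LK'/K'$ is vast.
   Context: All fields lie in a fixed algebraic closure and have characteristic zero. Two algebraic extensions of $K$ are disjoint over $K$ if they are linearly disjoint over $K$. An algebraic extension $L/K$ is called vast if $L \neq K$ and for every finite extension $E/K$ there exists a subfield $M$ of $L$ with $M \supsetneq K$ such that $M$ and $E$ are disjoint over $K$. *)

(* Defs.v *)
From HB Require Import structures.
From mathcomp Require Import all_boot all_order all_algebra.
Set Implicit Arguments. Unset Strict Implicit. Unset Printing Implicit Defensive.
Import GRing.Theory.
Local Open Scope ring_scope.

(* All fields are subfields (given as predicates) of a fixed algebraically
   closed field C of characteristic 0. *)
Section Defs.
Variable C : closedFieldType.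

Definition is_subfield (F : C -> Prop) : Prop :=
  [/\ F 0, F 1,
      (forall x y, F x -> F y -> F (x - y)),
      (forall x y, F x -> F y -> F (x * y)) &
      (forall x, F x -> F x^-1)].

Definition subf (A B : C -> Prop) : Prop := forall x, A x -> B x.

Definition algebraic_over (K : C -> Prop) (x : C) : Prop :=
  exists p : {poly C}, [/\ p != 0, (forall i, K p`_i) & root p x].

Definition algebraic_ext (K L : C -> Prop) : Prop :=
  [/\ is_subfield K, is_subfield L, subf K L &
      forall x, L x -> algebraic_over K x].

Definition finite_ext (K E : C -> Prop) : Prop :=
  [/\ is_subfield K, is_subfield E, subf K E &
      exists s : seq C, (forall i, (i < size s)%N -> E s`_i) /\
        forall x, E x -> exists c : nat -> C,
          (forall i, K (c i)) /\ x = \sum_(i < size s) c i * s`_i].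

Definition lin_indep (K : C -> Prop) (s : seq C) : Prop :=
  forall c : nat -> C, (forall i, K (c i)) ->
    \sum_(i < size s) c i * s`_i = 0 -> forall i, (i < size s)%N -> c i = 0.

Definition lin_disjoint (K E L : C -> Prop) : Prop :=
  forall s : seq C, (forall i, (i < size s)%N -> E s`_i) ->
    lin_indep K s -> lin_indep L s.

Definition compositum (L E : C -> Prop) : C -> Prop :=
  fun x => forall F, is_subfield F -> subf L F -> subf E F -> F x.

Definition vast (K L : C -> Prop) : Prop :=
  [/\ algebraic_ext K L,
      (exists x, L x /\ ~ K x) &
      forall E, finite_ext K E ->
        exists M : C -> Prop,
          [/\ is_subfield M, subf K M, subf M L, (exists x, M x /\ ~ K x) &
              lin_disjoint K M E]].
End Defs.

(* Main.v *)
Require Import Defs.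
From HB Require Import structures.
From mathcomp Require Import all_boot all_order all_algebra.
From mathcomp Require Import boolp.
Set Implicit Arguments. Unset Strict Implicit. Unset Printing Implicit Defensive.
Import GRing.Theory.
Local Open Scope ring_scope.

Section Sub.
Variable C : closedFieldType.
Definition predK (K : C -> Prop) : {pred C} := fun x => `[< is_subfield K -> K x >].

Lemma predKP (K : C -> Prop) x : is_subfield K -> (x \in predK K) <-> K x.
Proof.
move=> HK; rewrite /predK unfold_in; split => [/asboolP H|H]; first exact: H.
by apply/asboolP.
Qed.

Lemma predK_closed (K : C -> Prop) : GRing.divring_closed (predK K).
Proof.
case: (EM (is_subfield K)) => [HK|nHK]; last first.
  have T x : x \in predK K by rewrite unfold_in; apply/asboolP.
  by split => [|x y _ _|x y _ _]; apply: T.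
have [H0 H1 HB HM HV] := HK.
split; first by apply/predKP.
- by move=> x y /predKP-/(_ HK) Hx /predKP-/(_ HK) Hy; apply/predKP => //; apply: HB.
- move=> x y /predKP-/(_ HK) Hx /predKP-/(_ HK) Hy; apply/predKP => //; apply: HM => //.
  exact: HV.
Qed.

HB.instance Definition _ (K : C -> Prop) :=
  GRing.isDivringClosed.Build C (predK K) (predK_closed K).

Record subK (K : C -> Prop) := SubK { vK : C; _ : vK \in predK K }.
HB.instance Definition _ K := [isSub for (@vK K)].
HB.instance Definition _ K := [Choice of subK K by <:].
HB.instance Definition _ K := [SubChoice_isSubComUnitRing of subK K by <:].
HB.instance Definition _ K := [SubComUnitRing_isSubIntegralDomain of subK K by <:].
HB.instance Definition _ K := [SubIntegralDomain_isSubField of subK K by <:].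


Section SF.
Variable (K : C -> Prop) (HK : is_subfield K).
Lemma sf0 : K 0. Proof. by case: HK. Qed.
Lemma sf1 : K 1. Proof. by case: HK. Qed.
Lemma sfB x y : K x -> K y -> K (x - y). Proof. by case: HK => _ _ H _ _; apply: H. Qed.
Lemma sfM x y : K x -> K y -> K (x * y). Proof. by case: HK => _ _ _ H _; apply: H. Qed.
Lemma sfV x : K x -> K x^-1. Proof. by case: HK => _ _ _ _ H; apply: H. Qed.
Lemma sfN x : K x -> K (- x). Proof. by move=> Hx; rewrite -sub0r; apply: sfB => //; apply: sf0. Qed.
Lemma sfD x y : K x -> K y -> K (x + y).
Proof. by move=> Hx Hy; rewrite -[y]opprK; apply: sfB => //; apply: sfN. Qed.
Lemma sfX x n : K x -> K (x ^+ n).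
Proof. by move=> Hx; elim: n => [|n IH]; [rewrite expr0; apply: sf1 | rewrite exprS; apply: sfM]. Qed.
Lemma sf_sum (I : Type) (r : seq I) (P : pred I) (f : I -> C) :
  (forall i, P i -> K (f i)) -> K (\sum_(i <- r | P i) f i).
Proof. by move=> H; apply: big_ind => //; [apply: sf0 | apply: sfD]. Qed.
Lemma sf_nat n : K n%:R.
Proof. elim: n => [|n IH]; first exact: sf0.
by rewrite -addn1 natrD; apply: sfD => //; apply: sf1. Qed.

Lemma sub_val (a : subK K) : K (val a).
Proof. by apply/predKP => //; case: a. Qed.

Lemma in_val x : K x -> exists a : subK K, val a = x.
Proof. by move=> Hx; exists (SubK ((predKP x HK).2 Hx)). Qed.

Lemma lift_poly (q : {poly C}) : (forall i, K q`_i) ->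
  exists p : {poly subK K}, map_poly val p = q.
Proof.
move=> Hq.
exists (\poly_(i < size q) insubd (0 : subK K) q`_i).
apply/polyP => i; rewrite coef_map coef_poly.
case: ifP => Hi /=; last by rewrite nth_default // leqNgt Hi.
by rewrite insubdK //; apply/predKP => //; apply: Hq.
Qed.

Lemma horner_sf (p : {poly C}) x : (forall i, K p`_i) -> K x -> K p.[x].
Proof.
move=> Hp Hx; rewrite horner_coef; apply: sf_sum => i _.
by apply: sfM => //; apply: sfX.
Qed.
End SF.

Lemma compositum_sf (L E : C -> Prop) : is_subfield (compositum L E).
Proof.
split.
- by move=> F HF _ _; apply: sf0.
- by move=> F HF _ _; apply: sf1.
- by move=> x y Hx Hy F HF HL HE; apply: sfB => //; [apply: Hx | apply: Hy].
- by move=> x y Hx Hy F HF HL HE; apply: sfM => //; [apply: Hx | apply: Hy].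
- by move=> x Hx F HF HL HE; apply: sfV => //; apply: Hx.
Qed.

Lemma compositum_l (L E : C -> Prop) : subf L (compositum L E).
Proof. by move=> x Hx F _ HL _; apply: HL. Qed.
Lemma compositum_r (L E : C -> Prop) : subf E (compositum L E).
Proof. by move=> x Hx F _ _ HE; apply: HE. Qed.


Section Alg.
Variables (K K' : C -> Prop) (HK' : is_subfield K') (KK' : subf K K').
Local Notation F := (subK K').
Local Notation iota := (val : F -> C).

Lemma alg_integral x : algebraic_over K x -> integralOver iota x.
Proof.
case=> p [pn0 Kp rp]; apply/integral_algebraic.
have [q Hq] := lift_poly HK' (fun i => KK' (Kp i)).
exists q; last by rewrite Hq.
by apply: contra pn0; rewrite -Hq => /eqP->; rewrite map_poly0.
Qed.

Lemma integral_alg x : integralOver iota x -> algebraic_over K' x.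
Proof.
case=> p mp rp; exists (map_poly iota p); split => //.
  by rewrite map_poly_eq0 monic_neq0.
by move=> i; rewrite coef_map; apply: sub_val.
Qed.

Lemma integral_sf : is_subfield (integralOver iota).
Proof.
split.
- exact: integral0.
- exact: integral1.
- by move=> x y; apply: integral_sub.
- by move=> x y; apply: integral_mul.
- by move=> x; apply: integral_inv.
Qed.

Lemma compositum_alg (L : C -> Prop) : algebraic_ext K L ->
  algebraic_ext K' (compositum L K').
Proof.
case=> _ _ _ HL; split => //; first exact: compositum_sf.
  exact: compositum_r.
move=> x Hx; apply: integral_alg; apply: Hx; first exact: integral_sf.
  by move=> y /HL; apply: alg_integral.
by move=> y Hy; have [a <-] := in_val HK' Hy; apply: integral_id.
Qed.
End Alg.


Lemma sum2 (c : nat -> C) (a b : C) :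
  \sum_(i < size [:: a; b]) c i * [:: a; b]`_i = c 0%N * a + c 1%N * b.
Proof. by rewrite /= !big_ord_recl big_ord0 /= addr0. Qed.

Lemma notin_K' (K K' L : C -> Prop) x :
  is_subfield K -> is_subfield K' -> is_subfield L ->
  lin_disjoint K K' L -> L x -> ~ K x -> ~ K' x.
Proof.
move=> HK HK' HL dis Lx nKx K'x.
have HI : lin_indep K [:: 1; x].
  move=> c Kc; rewrite sum2 mulr1 => H i Hi.
  have c1 : c 1%N = 0.
    apply/eqP; apply/negPn/negP => c1n; apply: nKx.
    have -> : x = - (c 0%N) / c 1%N.
      by apply: (mulfI c1n); rewrite mulrCA mulfV // mulr1; apply/eqP; rewrite -addr_eq0 addrC H.
    by apply: sfM => //; [apply: sfN | apply: sfV].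
  move: H; rewrite c1 mul0r addr0 => c0.
  by case: i Hi => [|[|]].
have H := dis [:: 1; x] _ HI (fun i => if i == 0%N then x else -1).
suff /eqP : (-1 : C) = 0 by rewrite oppr_eq0 oner_eq0.
apply: (H _ _ _ 1%N isT).
- by case => [|[|]] //= _; apply: sf1.
- by move=> [|i] //=; apply: (sfN HL); apply: (sf1 HL).
- by rewrite (sum2 (fun i => if i == 0%N then x else -1)) /= mulr1 mulN1r subrr.
Qed.


Definition span (K : C -> Prop) (s : seq C) (x : C) :=
  exists c : nat -> C, (forall i, K (c i)) /\ x = \sum_(i < size s) c i * s`_i.

Section Span.
Variables (K : C -> Prop) (HK : is_subfield K).

Lemma span_nil : span K [::] 0.
Proof. by exists (fun=> 0); split; [move=> _; apply: sf0 | rewrite big_ord0]. Qed.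

Lemma span_cat u v x y : span K u x -> span K v y -> span K (u ++ v) (x + y).
Proof.
move=> [cu [Ku ->]] [cv [Kv ->]].
exists (fun i => if (i < size u)%N then cu i else cv (i - size u)%N); split.
  by move=> i; case: ifP.
rewrite size_cat big_split_ord /=; congr (_ + _); apply: eq_bigr => i _.
  by rewrite /= ltn_ord nth_cat ltn_ord.
by rewrite /= nth_cat ltnNge leq_addr /= addKn.
Qed.

Lemma span_scale t a y : span K t y -> span K (map ( *%R a) t) (a * y).
Proof.
move=> [c [Kc ->]]; exists c; split => //.
rewrite size_map mulr_sumr; apply: eq_bigr => i _.
by rewrite (nth_map 0) // mulrCA.
Qed.

Lemma span_tower t s (c : nat -> C) : (forall i, span K t (c i)) ->
  span K (flatten (map (fun a => map ( *%R a) t) s)) (\sum_(i < size s) c i * s`_i).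
Proof.
elim: s c => [|a s IH] c Hc; first by rewrite big_ord0; apply: span_nil.
rewrite big_ord_recl /=; apply: span_cat; first by rewrite mulrC; apply: span_scale.
have := IH (fun i => c i.+1) (fun i => Hc i.+1).
by congr (span _ _ _); apply: eq_bigr => i _; rewrite lift0.
Qed.
End Span.

Lemma seqP (P : C -> Prop) (s : seq C) :
  (forall i, (i < size s)%N -> P s`_i) <-> (forall y, y \in s -> P y).
Proof.
split=> H; first by move=> y /(nthP 0) [i Hi <-]; apply: H.
by move=> i Hi; apply: H; apply: mem_nth.
Qed.

Lemma finite_tower (K K' E : C -> Prop) :
  finite_ext K K' -> finite_ext K' E -> finite_ext K E.
Proof.
move=> [HK HK' KK' [t [Ht St]]] [_ HE K'E [s [Hs Ss]]].
split => //; first by move=> x /KK' /K'E.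
exists (flatten (map (fun a => map ( *%R a) t) s)); split.
  apply/seqP => y /flattenP [u /mapP [a As ->] /mapP [b Bt ->]].
  apply: (sfM HE); first exact: ((seqP _ _).1 Hs a As).
  by apply: K'E; exact: ((seqP _ _).1 Ht b Bt).
move=> x /Ss [c [Kc ->]].
have Hc i : span K t (c i) by apply: St.
exact: span_tower.
Qed.


Lemma minpoly_ex (K : C -> Prop) x : algebraic_over K x ->
  exists m : {poly C}, [/\ m != 0, (forall i, K m`_i), root m x &
    forall p : {poly C}, p != 0 -> (forall i, K p`_i) -> root p x -> (size m <= size p)%N].
Proof.
move=> Hx.
pose P n := `[< exists p : {poly C}, [/\ p != 0, (forall i, K p`_i), root p x & size p = n] >].
have exP : exists n, P n.
  by case: Hx => p [pn0 Kp rp]; exists (size p); apply/asboolP; exists p.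
case: (ex_minnP exP) => n /asboolP [m [mn0 Km rm sm]] Hmin.
exists m; split => // p pn0 Kp rp; rewrite sm; apply: Hmin; apply/asboolP.
by exists p.
Qed.

Lemma pow_indep (K M0 E : C -> Prop) (m : {poly C}) x :
  is_subfield M0 -> M0 x -> lin_disjoint K M0 E ->
  m != 0 -> 
  (forall p : {poly C}, p != 0 -> (forall i, K p`_i) -> root p x -> (size m <= size p)%N) ->
  K 0 -> lin_indep E (mkseq (fun i => x ^+ i) (size m).-1).
Proof.
move=> HM0 M0x dis mn0 Hmin K0; apply: dis.
  by move=> i; rewrite size_mkseq => Hi; rewrite nth_mkseq //; apply: sfX.
move=> c Kc; rewrite size_mkseq => H0.
pose q := \poly_(i < (size m).-1) c i.
have rq : root q x.
  rewrite /root horner_poly; apply/eqP; rewrite -[RHS]H0; apply: eq_bigr => i _.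
  by rewrite nth_mkseq.
have q0 : q = 0.
  apply/eqP/negPn/negP => qn0.
  have := Hmin q qn0 _ rq.
  have szq := size_poly (size m).-1 c.
  rewrite -/q in szq.
  have : (0 < size m)%N by rewrite size_poly_gt0.
  move=> H1 H2; have : (size m <= (size m).-1)%N by apply: leq_trans (H2 _) szq => i; rewrite coef_poly; case: ifP.
  by case: (size m) H1 => [|k] //= _; rewrite ltnn.
move=> i Hi; have := congr1 (fun p : {poly C} => p`_i) q0.
by rewrite coef_poly Hi coef0.
Qed.


Section Adj.
Variables (K' : C -> Prop) (HK' : is_subfield K') (x : C).
Local Notation F := (subK K').
Local Notation iota := (val : F -> C).
Hypothesis Ix : integralOver iota x.

Definition Madj : C -> Prop := fun y => exists p : {poly F}, y = (map_poly iota p).[x].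

Lemma Madj_comp y (q : {poly F}) : Madj y -> Madj (map_poly iota q).[y].
Proof.
by case=> p ->; exists (q \Po p); rewrite map_comp_poly horner_comp.
Qed.

Lemma Madj_C (a : F) : Madj (iota a).
Proof. by exists a%:P; rewrite map_polyC hornerC. Qed.

Lemma Madj_B y z : Madj y -> Madj z -> Madj (y - z).
Proof. by case=> p -> [q ->]; exists (p - q); rewrite rmorphB hornerD hornerN. Qed.

Lemma Madj_M y z : Madj y -> Madj z -> Madj (y * z).
Proof. by case=> p -> [q ->]; exists (p * q); rewrite rmorphM hornerM. Qed.

Lemma Madj_integral y : Madj y -> integralOver iota y.
Proof.
case=> p ->; apply: integral_horner => //.
by apply/integral_poly => i; rewrite coef_map; apply: integral_id.
Qed.

Lemma take_poly1 (r : {poly F}) : take_poly 1 r = (r`_0)%:P.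
Proof. by apply/polyP => i; rewrite coef_take_poly coefC; case: i. Qed.

Lemma Madj_0 : Madj 0.
Proof. by rewrite -(rmorph0 iota); apply: Madj_C. Qed.

Lemma Madj_V y : Madj y -> Madj y^-1.
Proof.
move=> My; have [->|yn0] := eqVneq y 0; first by rewrite invr0; apply: Madj_0.
have [r mr rr] := Madj_integral My.
suff H : forall n (r : {poly F}), (size r <= n)%N -> r != 0 ->
    root (map_poly iota r) y -> Madj y^-1.
  by apply: (H _ r (leqnn _)) => //; apply: monic_neq0.
elim=> [|n IH] {mr rr}r szr rn0 rr.
  by move: szr; rewrite size_poly_leq0 (negPf rn0).
have E := poly_take_drop 1 r; rewrite take_poly1 expr1 in E.
set q := drop_poly 1 r in E.
have Hr : (map_poly iota r).[y] = (map_poly iota q).[y] * y + iota r`_0.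
  by rewrite -{1}E rmorphD rmorphM /= (map_polyX iota) (map_polyC iota) hornerD hornerMX hornerC addrC.
have [r0|r0] := eqVneq r`_0 0.
  rewrite r0 polyC0 add0r in E.
  have qn0 : q != 0 by apply: contra rn0; rewrite -E => /eqP->; rewrite mul0r.
  apply: (IH q) => //.
    by move: szr; rewrite -E size_mulX.
  by move: rr; rewrite /root Hr r0 rmorph0 addr0 mulf_eq0 (negPf yn0) orbF.
have R0 : iota r`_0 != 0 by rewrite fmorph_eq0.
have -> : y^-1 = (0 - (map_poly iota q).[y]) * iota (r`_0)^-1.
  apply: (mulfI yn0); rewrite mulfV // fmorphV sub0r mulrA mulrN mulrC.
  move: rr; rewrite /root Hr addr_eq0 => /eqP HQ.
  by rewrite [y * _]mulrC HQ opprK mulVf.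
apply: Madj_M; last exact: Madj_C.
by apply: Madj_B; [apply: Madj_0 | apply: Madj_comp].
Qed.

Lemma Madj_sf : is_subfield Madj.
Proof.
split; [exact: Madj_0 | | exact: Madj_B | exact: Madj_M | exact: Madj_V].
by rewrite -(rmorph1 iota); apply: Madj_C.
Qed.

Lemma Madj_x : Madj x.
Proof. by exists 'X; rewrite map_polyX hornerX. Qed.

Lemma Madj_K' : subf K' Madj.
Proof. by move=> y /(in_val HK') [a <-]; apply: Madj_C. Qed.

Lemma Madj_sub (G : C -> Prop) : is_subfield G -> subf K' G -> G x -> subf Madj G.
Proof.
move=> HG K'G Gx y [p ->]; apply: horner_sf => // i.
by rewrite coef_map; apply: K'G; apply: sub_val.
Qed.
End Adj.


Section Disj.
Variables (K' E : C -> Prop) (HK' : is_subfield K') (HE : is_subfield E) (K'E : subf K' E).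
Variables (x : C) (m : {poly C}).
Hypotheses (mn0 : m != 0) (K'm : forall i, K' m`_i) (rm : root m x).
Hypothesis Hpow : lin_indep E (mkseq (fun i => x ^+ i) (size m).-1).
Local Notation F := (subK K').
Local Notation iota := (val : F -> C).
Local Notation d := (size m).-1.

Lemma Madj_reduce y : Madj K' x y ->
  exists a : {poly F}, (size a <= d)%N /\ y = (map_poly iota a).[x].
Proof.
case=> p ->; have [mF HmF] := lift_poly HK' K'm.
have mF0 : mF != 0 by apply: contra mn0; rewrite -HmF => /eqP->; rewrite map_poly0.
exists (p %% mF); split.
  have := ltn_modpN0 p mF0; rewrite -(size_map_poly iota mF) HmF.
  by case: (size m) => // n; rewrite ltnS.
rewrite {1}(divp_eq p mF) rmorphD rmorphM /= hornerD hornerM HmF.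
by move/eqP: rm => ->; rewrite mulr0 add0r.
Qed.

Lemma sum_oapp k (f : 'I_k -> C) (g : 'I_k -> C) :
  \sum_(i < k) oapp f 0 (insub (val i)) * g i = \sum_(i < k) f i * g i.
Proof. by apply: eq_bigr => i _; rewrite valK. Qed.

Lemma Madj_disj : lin_disjoint K' (Madj K' x) E.
Proof.
move=> s Hs Is.
set k := size s.
have : forall j : 'I_k, exists a : {poly F},
    (size a <= d)%N /\ s`_j = (map_poly iota a).[x].
  by move=> j; apply: Madj_reduce; apply: Hs.
case/fin_all_exists => a Ha.
pose B : 'M[F]_(k, d) := \matrix_(j, i) (a j)`_i.
have key : forall w : 'I_k -> C,
    \sum_(j < k) w j * s`_j = \sum_(i < d) (\sum_(j < k) w j * iota (B j i)) * x ^+ i.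
  have Hsj : forall j : 'I_k, s`_j = \sum_(i < d) iota (B j i) * x ^+ i.
    move=> j; have [Hsz ->] := Ha j.
    rewrite (@horner_coef_wide _ d); last by rewrite size_map_poly.
    by apply: eq_bigr => i _; rewrite coef_map mxE.
  move=> w; under eq_bigr => j _ do rewrite Hsj mulr_sumr.
  rewrite exchange_big /=; apply: eq_bigr => i _; rewrite mulr_suml.
  by apply: eq_bigr => j _; rewrite mulrA.
have rfB : row_free B.
  apply: inj_row_free => v vB0.
  pose c' n := oapp (fun j : 'I_k => iota (v 0 j)) 0 (insub n).
  have Kc' : forall n, K' (c' n).
    by move=> n; rewrite /c'; case: insub => [j|] /=; [apply: sub_val | apply: (sf0 HK')].
  have S0 : \sum_(j < k) c' j * s`_j = 0.
    rewrite /c' (sum_oapp (fun j => iota (v 0 j))) key.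
    apply: big1 => i _.
    rewrite (_ : \sum_(j < k) _ = iota ((v *m B) 0 i)); first by rewrite vB0 mxE rmorph0 mul0r.
    by rewrite mxE rmorph_sum; apply: eq_bigr => j _; rewrite rmorphM.
  apply/rowP => j; rewrite mxE.
  have := Is c' Kc' S0 j (ltn_ord j).
  rewrite /c' valK /= => H; apply: val_inj; move: H => /= ->.
  exact: (esym (rmorph0 iota)).
have rfB' : row_free (map_mx iota B) by rewrite row_free_map.
move=> c Ec H0 n Hn.
pose e : 'rV[C]_k := \row_j c j.
have e0 : e = 0.
  apply: (row_free_inj rfB'); rewrite mul0mx.
  apply/rowP => i; rewrite !mxE.
  pose g n := oapp (fun i : 'I_d => \sum_(j < k) c j * iota (B j i)) 0 (insub n).
  have Eg : forall n, E (g n).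
    move=> n'; rewrite /g; case: insub => [i0|] /=; last exact: (sf0 HE).
    by apply: (sf_sum HE) => j _; apply: (sfM HE) => //; apply: K'E; apply: sub_val.
  have S1 : \sum_(i < size (mkseq (fun i => x ^+ i) d)) g i * (mkseq (fun i => x ^+ i) d)`_i = 0.
    rewrite size_mkseq; under eq_bigr => i' _ do rewrite nth_mkseq //.
    by rewrite /g (sum_oapp (fun i => \sum_(j < k) c j * iota (B j i))) -key.
  have := @Hpow g Eg S1 i; rewrite size_mkseq ltn_ord /g valK /= => H; rewrite -[RHS]H //.
  by apply: eq_bigr => j _; rewrite !mxE.
have := congr1 (fun e : 'rV[C]_k => e 0 (Ordinal Hn)) e0.
by rewrite !mxE.
Qed.
End Disj.

End Sub.


Unset Implicit Arguments.
Theorem lemma2p2 (C : closedFieldType) (char0 : [pchar C] =i pred0)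
  (K L K' : C -> Prop) :
  vast K L -> finite_ext K K' -> lin_disjoint K K' L ->
  vast K' (compositum L K').
Proof.
move=> [algL [x0 [Lx0 nKx0]] HV] fK' dis.
have [HK HK' KK' _] := fK'.
have [_ HL KL Lalg] := algL.
split.
- exact: (compositum_alg HK' KK' algL).
- exists x0; split; first exact: compositum_l.
  exact: (notin_K' HK HK' HL dis Lx0 nKx0).
move=> E fE.
have fKE := finite_tower fK' fE.
have [_ HE K'E _] := fE.
have [M0 [HM0 KM0 M0L [x [M0x nKx]] disM0]] := HV E fKE.
have Lx := M0L x M0x.
have nK'x := notin_K' HK HK' HL dis Lx nKx.
have [m [mn0 Km rm Hmin]] := minpoly_ex (Lalg x Lx).
have Hpow := pow_indep HM0 M0x disM0 mn0 Hmin (sf0 HK).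
have Ix : integralOver (val : subK K' -> C) x := alg_integral HK' KK' (Lalg x Lx).
exists (Madj K' x); split.
- exact: (Madj_sf Ix).
- exact: (Madj_K' HK').
- apply: (Madj_sub HK') => //; first exact: compositum_sf.
    exact: compositum_r.
  exact: compositum_l.
- by exists x; split => //; apply: Madj_x.
- exact (Madj_disj HK' HE K'E mn0 (fun i => KK' _ (Km i)) rm Hpow).
Qed.
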